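(* Let $Q=\{q_1,\ldots,q_n\}\subset\mathbb{P}^1$ be distinct points, $\vec g=(g_1,\ldots,g_n)$ effective divisors on $[0,1)$ of common degree $r$, and for each $i$ fix a good arrangement $a_{i,1},\ldots,a_{i,r}$ of $g_i$. Let $k_1,\ldots,k_r\in\mathbb{Z}$, $E^j=[k_j;a_{1,j},\ldots,a_{n,j}]$, $\tau_j=\#\{i: a_{i,j}\ge a_{i,j+1}\}$ and $z_j=k_{j+1}-(\tau_j+k_j+2-n)$, all indices modulo $r$. Then there exist nonzero zero-residue maps $\theta^j:E^j\to E^{j+1}\otimes\Omega^1(\log Q)$ for all $j=1,\ldots,r$ if and only if $z_j\geq0$ for all $j$; in this case $z_j$ is the number of zeros of $\theta^j$ beyond those required by the zero-residue condition. Moreover $z_1+\cdots+z_r=\delta(\vec g)$, so a choice of the $k_j$ with all $z_j\ge 0$ exists if and only if $\delta(\vec g)\geq 0$.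
   Context: $[k;a_1,\ldots,a_n]$ ($k\in\mathbb{Z}$, $a_i\in[0,1)$) is the parabolic line bundle with underlying bundle $\mathcal{O}(k)$ and weight $a_i$ at $q_i$. A zero-residue map $[k;a]\to[k';a']\otimes\Omega^1(\log Q)$ is a holomorphic map $\mathcal{O}(k)\to\mathcal{O}(k'+n-2)$ (using $\Omega^1(\log Q)\cong\mathcal{O}(n-2)$) vanishing at every $q_i$ with $a_i\geq a'_i$ (these are the required zeros). An arrangement of $g_i=\sum m_i(\alpha)[\alpha]$ is a sequence $a_{i,1},\ldots,a_{i,r}$ in $[0,1)$ containing each $\alpha$ exactly $m_i(\alpha)$ times; it is good if $\#\{t: a_{i,t}\ge a_{i,t+1}\}$ (indices mod $r$) is minimal among arrangements. The defect is $\delta(\vec g)=(n-2)r-\sum_i\max_\alpha m_i(\alpha)$. *)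

(* Defs.v *)
From HB Require Import structures.
From mathcomp Require Import all_boot all_order all_algebra all_field.
From mathcomp Require Import reals.
Set Implicit Arguments. Unset Strict Implicit. Unset Printing Implicit Defensive.
Import Order.TTheory GRing.Theory Num.Theory.
Local Open Scope ring_scope.

(* Points of P^1(C): [Some x] is the affine point x, [None] is infinity.   *)
Definition P1 := option algC.

(* A global section of O(d) on P^1, written in the affine chart: a         *)
(* polynomial of degree <= d (only 0 if d < 0).  A holomorphic map         *)
(* O(k) -> O(m) is exactly a global section of O(m - k).                   *)
Definition is_section (d : int) (p : {poly algC}) : Prop :=
  ((size p)%:Z <= d + 1)%R.

Definition ordz (d : int) (p : {poly algC}) (x : P1) : nat :=
  match x with
  | Some c => mup c p
  | None => absz (d - ((size p).-1)%:Z)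
  end.

Definition vanishes_at (d : int) (p : {poly algC}) (x : P1) : Prop :=
  match x with
  | Some c => root p c
  | None => ((size p)%:Z <= d)%R
  end.

(* Zero-residue map [k; a] -> [k'; a'] (x) Omega^1(log Q), with
   Omega^1(log Q) = O(n-2): a holomorphic map O(k) -> O(k'+n-2) vanishing at
   every q_i with a_i >= a'_i. *)
Definition zero_residue (R : realType) (n : nat) (Q : 'I_n -> P1)
    (k : int) (a : 'I_n -> R) (k' : int) (a' : 'I_n -> R)
    (theta : {poly algC}) : Prop :=
  is_section (k' + n%:Z - 2 - k) theta /\
  forall i : 'I_n, (a' i <= a i)%R -> vanishes_at (k' + n%:Z - 2 - k) theta (Q i).

(* An arrangement a_{i,1..r} of g_i is encoded as a function 'I_r -> R;  *)
(* the divisor g_i is the multiset of its values.                        *)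
Definition arr (R : realType) (r : nat) (s : 'I_r -> R) : seq R :=
  [seq s t | t <- enum 'I_r].

Definition cdesc (R : realType) (s : seq R) : nat :=
  \sum_(t < size s) (nth 0 s (t.+1 %% size s) <= nth 0 s t)%R.

Definition good (R : realType) (s : seq R) : Prop :=
  forall s' : seq R, perm_eq s s' -> (cdesc s <= cdesc s')%N.

Definition maxmult (R : realType) (s : seq R) : nat :=
  \max_(x <- s) count_mem x s.

Definition defect (R : realType) (n r : nat) (a : 'I_n -> 'I_r -> R) : int :=
  (n%:Z - 2) * r%:Z - (\sum_(i < n) maxmult (arr (a i)))%:Z.

Definition tau (R : realType) (n r : nat) (a : 'I_n -> 'I_r -> R) (j : 'I_r) : nat :=
  #|[set i : 'I_n | (a i (ordS j) <= a i j)%R]|.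

Definition zval (R : realType) (n r : nat) (a : 'I_n -> 'I_r -> R)
    (k : 'I_r -> int) (j : 'I_r) : int :=
  k (ordS j) - ((tau a j)%:Z + k j + 2 - n%:Z).

(* Main.v *)
Require Import Defs.
From HB Require Import structures.
From mathcomp Require Import all_boot all_order all_algebra all_field.
From mathcomp Require Import reals.
Import Order.TTheory GRing.Theory Num.Theory.
From mathcomp Require Import zify.

Section Comb.
Variable R : realType.

Fixpoint ldesc (s : seq R) : nat :=
  if s is x :: s' then (if s' is y :: _ then ((y <= x)%R + ldesc s')%N else 0%N) else 0%N.

Lemma ldesc_cat (A B : seq R) : ldesc (A ++ B) <= ldesc A + ldesc B + 1.
Proof.
elim: A => [|x A IH] /=; first by rewrite add0n leq_addr.
case: A IH => [|y A] IH /=.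
  by clear IH; case: B => [|z B] /=; rewrite ?leq_b1 // add0n addnC leq_add2l leq_b1.
move: IH => /=; lia.
Qed.

Lemma ldesc_sorted (s : seq R) : sorted <%R s -> ldesc s = 0.
Proof.
elim: s => [|x s IH] //=; case: s IH => [|y s] IH //= /andP[xy hs].
move: (IH hs) => /= ->; by rewrite addn0 leNgt xy.
Qed.

Lemma ldesc_flatten (ls : seq (seq R)) :
  all (fun l => ldesc l == 0) ls -> ldesc (flatten ls) <= (size ls).-1.
Proof.
elim: ls => [|l ls IH] //= /andP[/eqP hl hls].
case: ls IH hls => [|l' ls] IH hls /=; first by rewrite cats0 hl.
apply: leq_trans (ldesc_cat _ _) _; rewrite hl add0n addn1 ltnS.
exact: IH.
Qed.

Lemma ldesc_sum (x : R) s :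
  ldesc (x :: s) = \sum_(i < size s) (nth 0%R s i <= nth 0%R (x :: s) i)%R.
Proof.
elim: s x => [|y s IH] x; first by rewrite big_ord0.
change (ldesc (x :: y :: s)) with ((y <= x)%R + ldesc (y :: s)).
by rewrite big_ord_recl IH.
Qed.

Lemma cdesc_cons (x : R) s :
  cdesc (x :: s) = ldesc (x :: s) + (x <= last x s)%R.
Proof.
rewrite ldesc_sum /cdesc /= big_ord_recr /= modnn; congr (_ + _).
  apply: eq_bigr => i _ /=; rewrite modn_small //.
  by rewrite ltnS.
have -> : (nth 0%R (x :: s) (size s)) = last x s.
  by rewrite -[size s]/((size (x :: s)).-1) nth_last.
done.
Qed.

Lemma cdesc_ldesc (s : seq R) : cdesc s <= ldesc s + 1.
Proof.
case: s => [|x s]; first by rewrite /cdesc big_ord0.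
by rewrite cdesc_cons leq_add2l leq_b1.
Qed.

Lemma desc_lower {N} (f : 'I_N -> R) x :
  \sum_(t < N) (f t == x) <= \sum_(t < N) (f (ordS t) <= f t)%R.
Proof.
set S := @ordS N.
have h1 : \sum_(t < N) (f t == x) = \sum_(t < N) ((f t == x) && (f (S t) <= x)%R)
   + \sum_(t < N) ((f t == x) && (x < f (S t))%R).
  rewrite -big_split; apply: eq_bigr => t _ /=.
  by case: (f t == x) => //=; case: leP.
have h2 : \sum_(t < N) ((f t == x) && (x < f (S t))%R) <=
          \sum_(t < N) (~~ (x < f t)%R && (x < f (S t))%R).
  apply: leq_sum => t _; case: eqP => //= ->; by rewrite ltxx.
have e1 : \sum_(t < N) (x < f t)%R = \sum_(t < N) (x < f (S t))%R.
  exact: (reindex_inj (@ordS_inj N)).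
have s1 : \sum_(t < N) (x < f t)%R = \sum_(t < N) ((x < f t)%R && (x < f (S t))%R)
   + \sum_(t < N) ((x < f t)%R && ~~ (x < f (S t))%R).
  rewrite -big_split; apply: eq_bigr => t _ /=.
  by case: (x < f t)%R; case: (x < f (S t))%R.
have s2 : \sum_(t < N) (x < f (S t))%R = \sum_(t < N) ((x < f t)%R && (x < f (S t))%R)
   + \sum_(t < N) (~~ (x < f t)%R && (x < f (S t))%R).
  rewrite -big_split; apply: eq_bigr => t _ /=.
  by case: (x < f t)%R; case: (x < f (S t))%R.
have h3 : \sum_(t < N) ((f t == x) && (f (S t) <= x)%R) +
          \sum_(t < N) ((x < f t)%R && ~~ (x < f (S t))%R) <=
          \sum_(t < N) (f (S t) <= f t)%R.
  rewrite -big_split; apply: leq_sum => t _ /=.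
  rewrite -leNgt; case: eqP => [->|_] /=.
    by rewrite ltxx /= addn0.
  case: (ltP x (f t)) => //= hx; case: (leP (f (S t)) x) => //= hy.
  by rewrite (le_trans hy (ltW hx)).
lia.
Qed.

Lemma count_mem_lower (s : seq R) x : count_mem x s <= cdesc s.
Proof.
have -> : count_mem x s = \sum_(t < size s) (nth 0%R s t == x).
  rewrite -sum1_count big_mkcond /= (big_nth 0%R) big_mkord.
  by apply: eq_bigr => i _; case: (_ == _).
exact: (desc_lower (fun t : 'I_(size s) => nth 0%R s t) x).
Qed.

Lemma maxmult_lower (s : seq R) : maxmult s <= cdesc s.
Proof. by apply/bigmax_leqP_seq => y _ _; apply: count_mem_lower. Qed.

Lemma sum_lt_min m c : \sum_(k < m) (k < c) = minn m c.
Proof.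
elim: m => [|m IH]; first by rewrite big_ord0 min0n.
rewrite big_ord_recr /= IH; case: (ltnP m c) => h /=; lia.
Qed.

Definition layers (s : seq R) :=
  [seq [seq y <- sort <=%R (undup s) | k < count_mem y s] | k <- iota 0 (maxmult s)].

Lemma layers_perm (s : seq R) : perm_eq s (flatten (layers s)).
Proof.
apply/allP => y _; apply/eqP.
rewrite count_flatten -map_comp sumnE big_map.
under eq_bigr => k _ do
  rewrite /= count_uniq_mem ?filter_uniq ?sort_uniq ?undup_uniq // mem_filter
    mem_sort mem_undup.
rewrite -(subnKC (leq0n (maxmult s))) /= -/(index_iota 0 (maxmult s)) big_mkord.
case: (boolP (y \in s)) => ys.
  under eq_bigr => k _ do rewrite andbT.
  rewrite sum_lt_min; apply/esym/minn_idPr.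
  exact: (@leq_bigmax_seq _ s xpredT (fun z => count_mem z s) y ys isT).
rewrite big1 => [|k _]; last by rewrite andbF.
by apply/count_memPn.
Qed.

Lemma layers_cdesc (s : seq R) : s != [::] -> cdesc (flatten (layers s)) <= maxmult s.
Proof.
case: s => [|x s'] // _; set s := x :: s'.
have m_gt0 : 0 < maxmult s.
  have h := @leq_bigmax_seq _ s xpredT (fun z => count_mem z s) x (mem_head _ _) isT.
  have h1 : 0 < count_mem x s by rewrite /= eqxx.
  exact: leq_trans h1 h.
apply: leq_trans (cdesc_ldesc _) _.
have : ldesc (flatten (layers s)) <= (size (layers s)).-1.
  apply: ldesc_flatten; apply/allP => l /mapP [k _ ->]; apply/eqP.
  apply: ldesc_sorted; apply: sorted_filter; first exact: lt_trans.
  by rewrite sort_lt_sorted undup_uniq.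
rewrite size_map size_iota; lia.
Qed.

Lemma cdesc_good (s : seq R) : s != [::] -> good s -> cdesc s = maxmult s.
Proof.
move=> sn0 g; rewrite /good in g; apply/eqP; rewrite eqn_leq maxmult_lower andbT.
exact: leq_trans (g _ (layers_perm s)) (layers_cdesc _ sn0).
Qed.

Lemma cdesc_arr r (s : 'I_r -> R) : cdesc (arr s) = \sum_(t < r) (s (ordS t) <= s t)%R.
Proof.
have sz : size (arr s) = r by rewrite size_map size_enum_ord.
have nth_arr : forall t : 'I_r, nth 0%R (arr s) t = s t.
  by move=> t; rewrite (nth_map t) ?size_enum_ord // nth_ord_enum.
rewrite /cdesc -(big_mkord xpredT (fun t => (nth 0%R (arr s) (t.+1 %% size (arr s)) <= nth 0%R (arr s) t)%R : nat)).
rewrite sz big_mkord; apply: eq_bigr => t _.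
by rewrite -[(t.+1 %% r)%N]/(nat_of_ord (ordS t)) !nth_arr.
Qed.

End Comb.

Local Open Scope ring_scope.

Section Geo.
Variables (n : nat) (Q : 'I_n -> P1).
Hypothesis Q_inj : injective Q.

Definition affs (S : {set 'I_n}) : seq algC :=
  [seq oapp id 0 (Q i) | i <- enum [pred i | (i \in S) && (Q i != None)]].

Definition mkpoly S : {poly algC} := \prod_(c <- affs S) ('X - c%:P).

Lemma card_split (S : {set 'I_n}) :
  #|S| = (size (affs S) + #|[pred i | (i \in S) && (Q i == None)]|)%N.
Proof.
rewrite size_map -cardE -(cardID [pred i | Q i != None] S).
congr (_ + _)%N; apply: eq_card => i; rewrite !inE //.
by rewrite negbK andbC.
Qed.

Lemma card_none (S : {set 'I_n}) : (#|[pred i | (i \in S) && (Q i == None)]| <= 1)%N.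
Proof.
case: (pickP [pred i | (i \in S) && (Q i == None)]) => [i0 hi0|none].
  rewrite -(card1 i0); apply: subset_leq_card; apply/subsetP => i.
  move: hi0; rewrite !inE => /andP[_ /eqP h0] /andP[_ /eqP h].
  by apply/eqP; apply: Q_inj; rewrite h h0.
by rewrite (eq_card0 none).
Qed.

Lemma affs_uniq (S : {set 'I_n}) : uniq (affs S).
Proof.
rewrite map_inj_in_uniq ?enum_uniq // => i j.
rewrite !mem_enum !inE => /andP[_ hi] /andP[_ hj].
case E1: (Q i) hi => [ci|] // _; case E2: (Q j) hj => [cj|] // _ /= eij.
by apply: Q_inj; rewrite E1 E2 eij.
Qed.

Lemma mem_affs (S : {set 'I_n}) i c : i \in S -> Q i = Some c -> c \in affs S.
Proof.
move=> iS Qi; apply/mapP; exists i; last by rewrite Qi.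
by rewrite mem_enum inE iS Qi.
Qed.

Lemma affs_mem (S : {set 'I_n}) c : c \in affs S -> exists2 i, i \in S & Q i = Some c.
Proof.
case/mapP => i; rewrite mem_enum inE => /andP[iS]; case E: (Q i) => [ci|] //= _ ->.
by exists i.
Qed.

Lemma L1 (d : int) (S : {set 'I_n}) (p : {poly algC}) :
  p != 0 -> is_section d p -> (forall i, i \in S -> vanishes_at d p (Q i)) ->
  (#|S|%:Z <= d).
Proof.
move=> p0 sec van.
have hr : (size (affs S) < size p)%N.
  apply: max_poly_roots => //; last exact: affs_uniq.
  apply/allP => c /affs_mem [i iS Qi].
  by have := van i iS; rewrite Qi.
have sec' : (size p)%:Z <= d + 1 := sec.
have cs := card_split S.
have hc := card_none S.
move: cs hc; set C := #|[pred i | (i \in S) && (Q i == None)]| => cs hc.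
case: (pickP [pred i | (i \in S) && (Q i == None)]) => [i0 hi0|none].
  move: hi0; rewrite inE => /andP[i0S /eqP Qi0].
  have := van i0 i0S; rewrite Qi0 /= => hs.
  have hs' : (size p)%:Z <= d := hs.
  rewrite cs; lia.
have C0 : C = 0%N by rewrite /C (eq_card0 none).
rewrite cs; lia.
Qed.

Lemma L2 (d : int) (S : {set 'I_n}) : #|S|%:Z <= d ->
  [/\ mkpoly S != 0, is_section d (mkpoly S) &
      forall i, i \in S -> vanishes_at d (mkpoly S) (Q i)].
Proof.
move=> hS; have sz : size (mkpoly S) = (size (affs S)).+1 by rewrite size_prod_XsubC.
have cs := card_split S.
move: cs; set C := #|[pred i | (i \in S) && (Q i == None)]| => cs.
move: hS; rewrite cs => hS.
split.
- by rewrite -size_poly_eq0 sz.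
- rewrite /is_section sz; lia.
- move=> i iS; case E: (Q i) => [c|] /=.
    by rewrite root_prod_XsubC (mem_affs _ _ _ iS E).
  have : (0 < C)%N.
    by apply/card_gt0P; exists i; rewrite inE iS E.
  rewrite sz; lia.
Qed.

Lemma L3 (d : int) (p : {poly algC}) : p != 0 -> is_section d p ->
  exists D : seq P1, (forall x : P1, count_mem x D = ordz d p x) /\ (size D)%:Z = d.
Proof.
move=> p0 sec; case: (closed_field_poly_normal p) => rs e.
have lc0 : lead_coef p != 0 by rewrite lead_coef_eq0.
have szp : size p = (size rs).+1.
  by rewrite e size_scale // size_prod_XsubC.
exists ([seq Some c | c <- rs] ++ nseq (absz (d - ((size p).-1)%:Z)) None); split.
  case=> [c|] /=; rewrite count_cat count_nseq count_map /=.
    rewrite mul0n addn0.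
    have e' : p = (lead_coef p)%:P * \prod_(z <- rs) ('X - z%:P) by rewrite mul_polyC -e.
    rewrite e' mupMr ?rootC // mu_prod_XsubC.
    by apply: eq_count => y.
  by rewrite mul1n (@eq_count _ _ pred0) ?count_pred0.
have sec' : (size p)%:Z <= d + 1 := sec.
rewrite size_cat size_map size_nseq.
move: sec'; rewrite szp /= => sec'.
rewrite PoszD gez0_abs; lia.
Qed.

End Geo.

Theorem lemma6p7 (R : realType) (n r : nat) (Q : 'I_n -> P1)
    (Q_inj : injective Q) (r_gt0 : (0 < r)%N)
    (a : 'I_n -> 'I_r -> R)
    (a_range : forall i t, 0 <= a i t < 1)
    (a_good : forall i, good (arr (a i))) :
  (forall k : 'I_r -> int,
     ((exists theta : 'I_r -> {poly algC},
         forall j : 'I_r, theta j != 0 /\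
           zero_residue Q (k j) (fun i => a i j)
                          (k (ordS j)) (fun i => a i (ordS j)) (theta j))
      <-> (forall j, 0 <= zval a k j))
     /\ ((forall j, 0 <= zval a k j) ->
         forall (j : 'I_r) (th : {poly algC}), th != 0 ->
           zero_residue Q (k j) (fun i => a i j)
                          (k (ordS j)) (fun i => a i (ordS j)) th ->
           exists D : seq P1,
             (forall x : P1, count_mem x D =
                 ordz (k (ordS j) + n%:Z - 2 - k j) th x)
             /\ (size D)%:Z = (tau a j)%:Z + zval a k j)
     /\ \sum_(j < r) zval a k j = defect a)
  /\ ((exists k : 'I_r -> int, forall j, 0 <= zval a k j) <-> 0 <= defect a).
Proof.
pose S (j : 'I_r) : {set 'I_n} := [set i | (a i (ordS j) <= a i j)%R].
have tauS : forall j, tau a j = #|S j| by [].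
have zvalE : forall k j, zval a k j = (k (ordS j) + n%:Z - 2 - k j) - (tau a j)%:Z.
  by move=> k j; rewrite /zval; lia.
have sumz : forall k, \sum_(j < r) zval a k j = defect a.
  move=> k.
  have tsum : (\sum_(j < r) tau a j = \sum_(i < n) maxmult (arr (a i)))%N.
    under eq_bigr => j _ do rewrite /tau -sum1dep_card big_mkcond /=.
    rewrite exchange_big /=; apply: eq_bigr => i _.
    rewrite -cdesc_good ?cdesc_arr //.
    by rewrite -size_eq0 size_map size_enum_ord -lt0n.
  rewrite /defect -tsum.
  rewrite (eq_bigr (fun j => (k (ordS j) - k j) + ((n%:Z - 2) - (tau a j)%:Z))); last first.
    by move=> j _; rewrite /zval; lia.
  have ek : \sum_(j < r) k (ordS j) = \sum_(j < r) k j.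
    by symmetry; exact: (reindex_inj (@ordS_inj r)).
  rewrite big_split sumrB /= ek subrr add0r sumrB sumr_const card_ord.
  rewrite (big_morph Posz PoszD (erefl _)).
  by rewrite -[X in _ * X]natz mulr_natr.
split.
- move=> k; split; [split|split].
  + case=> theta h j.
    have [th0 [sec van]] := h j.
    have h1 : (#|S j|%:Z <= k (ordS j) + n%:Z - 2 - k j).
      apply: (@L1 n Q Q_inj _ (S j) (theta j) th0 sec) => i; rewrite inE; exact: van.
    rewrite zvalE tauS; lia.
  + move=> hz; exists (fun j => mkpoly n Q (S j)) => j.
    have hj : (#|S j|%:Z <= k (ordS j) + n%:Z - 2 - k j).
      by have := hz j; rewrite zvalE tauS; lia.
    have [h1 h2 h3] := @L2 n Q _ (S j) hj.
    split => //; split => // i hi; apply: h3; rewrite inE; exact: hi.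
  + move=> _ j th th0 [sec van].
    have [D [hD hs]] := @L3 _ _ th0 sec.
    exists D; split => //.
    rewrite hs zvalE; lia.
  + exact: sumz.
- split.
  + case=> k hk; rewrite -(sumz k); apply: sumr_ge0 => j _; exact: hk j.
  + move=> hd.
    pose c (j : 'I_r) := (tau a j)%:Z + 2 - n%:Z.
    pose k (j : 'I_r) := \sum_(t < r | (t < j)%N) c t.
    exists k.
    have z0 : forall j : 'I_r, (j.+1 < r)%N -> zval a k j = 0.
      move=> j hj; rewrite /zval /k /= (modn_small hj) (bigD1 j) ?ltnSn //=.
      rewrite (eq_bigl (fun t : 'I_r => (t < j)%N)) => [|t]; last first.
        by rewrite ltnS ltn_neqAle andbC.
      have -> : c j = (tau a j)%:Z + 2 - n%:Z by []. set X := \sum_(t < r | (t < j)%N) c t. lia.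
    have hr : (r.-1 < r)%N by rewrite ltn_predL.
    pose j0 := Ordinal hr.
    have zj0 : zval a k j0 = defect a.
      rewrite -(sumz k) (bigD1 j0) //= big1 ?addr0 // => j hj.
      apply: z0; move: hj; rewrite -val_eqE /= => hj.
      have := ltn_ord j; lia.
    move=> j; case: (ltnP j.+1 r) => h.
      by rewrite z0.
    have -> : j = j0 by apply/val_inj => /=; have := ltn_ord j; lia.
    by rewrite zj0.
Qed.
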